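(* Assume $k$ is algebraically closed of characteristic $0$ and $\mathfrak C_R \not\subseteq \mathfrak m^2$. Then, for a suitable choice of uniformizing parameter $t$ of $\overline R = k[[t]]$, $R$ has Herzog–Kunz generators $x_1, \ldots, x_n$ (so $R = k[[x_1,\ldots,x_n]]$) with $x_1 = t^{a_1}$ and $x_n = t^{a_n}$, and the element $$\omega = a_n x_n\, dx_1 - a_1 x_1\, dx_n \in \widetilde{\Omega}^1_{R/k}$$ is a nonzero torsion element of $\widetilde{\Omega}^1_{R/k}$.
   Context: Let $k$ be an algebraically closed field and let $(R,\mathfrak m)$ be a complete local noetherian domain of dimension $1$ containing $k$ with $R/\mathfrak m = k$; its normalization is $\overline R = k[[t]]$ with $R \subseteq k[[t]]$ finite birational. Let $v$ be the $t$-adic valuation; for $A \subseteq k((t))$ let $v(A) = \{v(f): f\in A\setminus\{0\}\}$. The conductor is $\mathfrak C_R = \{x \in \overline R : x\overline R \subseteq R\} = t^{c_R}\overline R$. The Herzog–Kunz sequence of $R$ is $v(\mathfrak m)\setminus v(\mathfrak m^2)$ listed increasingly as $a_1 < \cdots < a_n$ ($n=\mathrm{edim}(R)$); Herzog–Kunz generators are $x_i\in R$ with $v(x_i)=a_i$, and they satisfy $R = k[[x_1,\ldots,x_n]]$. $\widetilde{\Omega}^1_{R/k}$ is the universally finite module of Kähler differentials of $R$ over $k$; for $R = k[[X_1,\ldots,X_n]]/P$ it is $\bigoplus_i R\,dX_i$ modulo the submodule generated by $\sum_i \frac{\partial F}{\partial X_i} dX_i$, $F \in P$, with $dx_i$ the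 class of $dX_i$. An element is torsion if it is annihilated by some nonzero element of $R$. *)

(* Defs.v *)
(* Formal power series over k are modelled concretely as
   coefficient functions nat -> k; multivariate power series in n variables
   as functions from exponent vectors {ffun 'I_n -> nat} to k. *)
From mathcomp Require Import all_boot all_algebra.
Set Implicit Arguments. Unset Strict Implicit. Unset Printing Implicit Defensive.
Import GRing.Theory.
Local Open Scope ring_scope.

Section PS.
Variable k : fieldType.

Definition ps := nat -> k.
Definition pzero : ps := fun _ => 0.
Definition pconst (c : k) : ps := fun m => if m == 0%N then c else 0.
Definition padd (f g : ps) : ps := fun m => f m + g m.
Definition popp (f : ps) : ps := fun m => - f m.
Definition pscale (c : k) (f : ps) : ps := fun m => c * f m.
Definition pmul (f g : ps) : ps := fun m => \sum_(i < m.+1) f i * g (m - i)%N.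
Definition ppow (f : ps) (e : nat) : ps := iter e (pmul f) (pconst 1).
Definition psum (N : nat) (F : nat -> ps) : ps := fun m => \sum_(j < N) F j m.

Definition vord (f : ps) (a : nat) : Prop :=
  f a != 0 /\ forall i, (i < a)%N -> f i = 0.

(* R is given as a subset S of k[[t]] *)
Definition subalgebra (S : ps -> Prop) : Prop :=
  (forall c, S (pconst c)) /\ (forall f g, S f -> S g -> S (padd f g)) /\
  (forall f, S f -> S (popp f)) /\ (forall f g, S f -> S g -> S (pmul f g)).

Definition max_ideal (S : ps -> Prop) (f : ps) : Prop := S f /\ f 0%N = 0.
Definition max_ideal2 (S : ps -> Prop) (f : ps) : Prop :=
  exists (N : nat) (g h : nat -> ps),
    (forall j, (j < N)%N -> max_ideal S (g j) /\ max_ideal S (h j)) /\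
    f = psum N (fun j => pmul (g j) (h j)).
Definition conductor (S : ps -> Prop) (f : ps) : Prop :=
  forall g : ps, S (pmul f g).

Definition val_m (S : ps -> Prop) (b : nat) : Prop :=
  exists f, max_ideal S f /\ vord f b.
Definition val_m2 (S : ps -> Prop) (b : nat) : Prop :=
  exists f, max_ideal2 S f /\ vord f b.
Definition HKset (S : ps -> Prop) (b : nat) : Prop := val_m S b /\ ~ val_m2 S b.

Definition mps (n : nat) := {ffun 'I_n -> nat} -> k.

Definition monoeval (n : nat) (al : {ffun 'I_n -> nat}) (x : nat -> ps) : ps :=
  \big[pmul/pconst 1]_(i < n) ppow (x (val i)) (al i).

(* substitution F(x_1,..,x_n), for x_i with x_i(0) = 0: coefficient of t^m is
   the (finite) sum over exponent vectors of total degree <= m; we sum over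
   all exponent vectors with entries <= m, the extra ones contribute 0. *)
Definition subst (n : nat) (F : mps n) (x : nat -> ps) : ps :=
  fun m => \sum_(al : {ffun 'I_n -> 'I_m.+1})
      F [ffun i => val (al i)] * monoeval [ffun i => val (al i)] x m.

Definition pderiv (n : nat) (i : 'I_n) (F : mps n) : mps n :=
  fun al => ((al i).+1)%:R * F [ffun j => (al j + (j == i))%N].

(* the submodule N of (+)_i R dX_i generated by the gradients (dF/dX_i(x))_i,
   F in the kernel P of k[[X]] -> R, X_i |-> x_i;
   Omega~^1_{R/k} = ((+)_i R dX_i) / N *)
Definition in_relations (S : ps -> Prop) (n : nat) (x : nat -> ps)
    (w : 'I_n -> ps) : Prop :=
  exists (N : nat) (r : nat -> ps) (F : nat -> mps n),
    (forall j, (j < N)%N -> S (r j) /\ subst (F j) x = pzero) /\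
    forall i : 'I_n, w i = psum N (fun j => pmul (r j) (subst (pderiv i (F j)) x)).

(* omega = a_n x_n dx_1 - a_1 x_1 dx_n, as an element of (+)_i R dX_i *)
Definition omega (n : nat) (a : nat -> nat) (x : nat -> ps) : 'I_n -> ps :=
  fun i => padd (if val i == 0%N then pscale (a n.-1)%:R (x n.-1) else pzero)
                (if val i == n.-1 then popp (pscale (a 0%N)%:R (x 0%N)) else pzero).

Definition vscale (n : nat) (r : ps) (w : 'I_n -> ps) : 'I_n -> ps :=
  fun i => pmul r (w i).

End PS.
Arguments omega {k} n a x _.

(* Main.v *)
From HB Require Import structures.
Require Import Defs.
From mathcomp Require Import all_boot all_algebra.
From mathcomp Require Import boolp ring zify.
From Stdlib Require Import Classical_Prop.
Set Implicit Arguments. Unset Strict Implicit. Unset Printing Implicit Defensive.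
Import GRing.Theory.
Local Open Scope ring_scope.

Section Ring.
Variable k : fieldType.
Local Notation ps := (ps k).

Definition tr (N : nat) (f : ps) : {poly k} := \poly_(i < N) f i.

Lemma tr_coef N f i : (i < N)%N -> (tr N f)`_i = f i.
Proof. by move=> h; rewrite coef_poly h. Qed.

Lemma pmul_tr N f g m : (m < N)%N -> pmul f g m = (tr N f * tr N g)`_m.
Proof.
move=> hm; rewrite coefM /pmul; apply: eq_bigr => i _.
rewrite !tr_coef //; first exact: (leq_ltn_trans (leq_subr _ _) hm).
exact: (leq_trans (ltn_ord i) hm).
Qed.

Lemma pmulA : associative (@pmul k).
Proof.
move=> f g h; apply: funext => m.
have -> : pmul (pmul f g) h m = ((tr m.+1 f * tr m.+1 g) * tr m.+1 h)`_m.
  rewrite coefM; rewrite {1}/pmul; apply: eq_bigr => i _.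
  by rewrite (pmul_tr _ _ (N := m.+1)) ?tr_coef // ltnS leq_subr.
have -> : pmul f (pmul g h) m = (tr m.+1 f * (tr m.+1 g * tr m.+1 h))`_m.
  rewrite coefM; rewrite {1}/pmul; apply: eq_bigr => i _.
  by rewrite (pmul_tr _ _ (N := m.+1)) ?tr_coef // ltnS leq_subr.
by rewrite mulrA.
Qed.

Lemma pmulC : commutative (@pmul k).
Proof.
move=> f g; apply: funext => m; rewrite !(pmul_tr _ _ (ltnSn m)).
by rewrite mulrC.
Qed.

Lemma pmul1 : left_id (pconst 1) (@pmul k).
Proof.
move=> f; apply: funext => m; rewrite (pmul_tr _ _ (ltnSn m)).
have -> : tr m.+1 (pconst 1) = 1.
  apply/polyP => i; rewrite coef_poly coef1 /pconst.
  case: i => [|i] /=; first by []. by rewrite if_same.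
by rewrite mul1r tr_coef.
Qed.

Lemma pmulDl : left_distributive (@pmul k) (@padd k).
Proof.
move=> f g h; apply: funext => m; rewrite /padd /pmul -big_split /=.
by apply: eq_bigr => i _; rewrite mulrDl.
Qed.

Lemma paddA : associative (@padd k).
Proof. by move=> f g h; apply: funext => m; rewrite /padd addrA. Qed.
Lemma paddC : commutative (@padd k).
Proof. by move=> f g; apply: funext => m; rewrite /padd addrC. Qed.
Lemma padd0 : left_id (@pzero k) (@padd k).
Proof. by move=> f; apply: funext => m; rewrite /padd /pzero add0r. Qed.
Lemma paddN : left_inverse (@pzero k) (@popp k) (@padd k).
Proof. by move=> f; apply: funext => m; rewrite /padd /popp /pzero addNr. Qed.

HB.instance Definition _ := gen_eqMixin ps.
HB.instance Definition _ := gen_choiceMixin ps.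
HB.instance Definition _ := GRing.isZmodule.Build ps paddA paddC padd0 paddN.

Lemma one_neq0 : pconst 1 != pzero k :> ps.
Proof.
apply/eqP => /(congr1 (fun f => f 0%N)); rewrite /pconst /pzero /= => /eqP.
by rewrite oner_eq0.
Qed.

HB.instance Definition _ := GRing.Zmodule_isComNzRing.Build ps pmulA pmulC pmul1 pmulDl one_neq0.

Lemma addE (f g : ps) : padd f g = f + g. Proof. by []. Qed.
Lemma mulE (f g : ps) : pmul f g = f * g. Proof. by []. Qed.
Lemma oppE (f : ps) : popp f = - f. Proof. by []. Qed.
Lemma zeroE : pzero k = 0 :> ps. Proof. by []. Qed.
Lemma oneE : pconst (1 : k) = 1 :> ps. Proof. by []. Qed.


End Ring.

Section Basic.
Variable k : fieldType.
Local Notation ps := (ps k).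

Definition hi (p : nat) (f : ps) := forall i, (i < p)%N -> f i = 0.
Definition tpow (p : nat) : ps := fun m => (m == p)%:R.
Definition shift (p : nat) (f : ps) : ps := fun m => f (m + p)%N.

Lemma cD (f g : ps) m : (f + g) m = f m + g m. Proof. by []. Qed.
Lemma cN (f : ps) m : (- f) m = - f m. Proof. by []. Qed.
Lemma cB (f g : ps) m : (f - g) m = f m - g m. Proof. by []. Qed.
Lemma c0 m : (0 : ps) m = 0. Proof. by []. Qed.
Lemma cM (f g : ps) m : (f * g) m = \sum_(i < m.+1) f i * g (m - i)%N.
Proof. by []. Qed.
Lemma cM0 (f g : ps) : (f * g) 0%N = f 0%N * g 0%N.
Proof. by rewrite cM big_ord1. Qed.
Lemma c10 : (1 : ps) 0%N = 1. Proof. by []. Qed.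
Lemma cX0 (f : ps) e : (f ^+ e) 0%N = f 0%N ^+ e.
Proof. by elim: e => [|e IH]; rewrite ?expr0 // !exprS cM0 IH. Qed.

Lemma c_sum (I : Type) (r : seq I) (P : pred I) (F : I -> ps) m :
  (\sum_(i <- r | P i) F i) m = \sum_(i <- r | P i) F i m.
Proof.
elim: r => [|a r IH]; rewrite ?big_nil ?big_cons //.
by case: (P a) => //; rewrite cD IH.
Qed.

Lemma pconst_coef (c : k) (f : ps) m : (pconst c * f) m = c * f m.
Proof.
rewrite cM big_ord_recl big1 ?addr0 ?subn0 //.
by move=> i _; rewrite /pconst /= mul0r.
Qed.
Lemma pconstD (a b : k) : pconst (a + b) = pconst a + pconst b :> ps.
Proof. apply: funext => m; rewrite cD /pconst; by case: (m == 0)%N; rewrite ?addr0. Qed.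
Lemma pconstM (a b : k) : pconst (a * b) = pconst a * pconst b :> ps.
Proof. apply: funext => m; rewrite pconst_coef /pconst; by case: (m == 0)%N; rewrite ?mulr0. Qed.
Lemma pconstN (a : k) : pconst (- a) = - pconst a :> ps.
Proof. apply: funext => m; rewrite cN /pconst; by case: (m == 0)%N; rewrite ?oppr0. Qed.
Lemma pconst0 : pconst 0 = 0 :> ps.
Proof. by apply: funext => m; rewrite /pconst; case: (m == 0)%N. Qed.
Lemma pconst1 : pconst 1 = 1 :> ps. Proof. by []. Qed.
Lemma pconst_sum (I : Type) (r : seq I) (P : pred I) (F : I -> k) :
  pconst (\sum_(i <- r | P i) F i) = \sum_(i <- r | P i) pconst (F i) :> ps.
Proof.
elim: r => [|a r IH]; rewrite ?big_nil ?pconst0 // !big_cons.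
by case: (P a) => //; rewrite pconstD IH.
Qed.

Lemma psumE N (F : nat -> ps) : psum N F = \sum_(j < N) F j.
Proof. by apply: funext => m; rewrite c_sum. Qed.
Lemma ppowE (f : ps) e : ppow f e = f ^+ e.
Proof. by elim: e => [|e IH] //=; rewrite exprS -IH. Qed.
Lemma pscaleE c (f : ps) : pscale c f = pconst c * f.
Proof. by apply: funext => m; rewrite pconst_coef. Qed.

Lemma hi_le p q f : (q <= p)%N -> hi p f -> hi q f.
Proof. by move=> hqp h i hi'; apply: h; apply: leq_trans hqp. Qed.
Lemma hi0 p : hi p 0. Proof. by []. Qed.
Lemma hi_add p f g : hi p f -> hi p g -> hi p (f + g).
Proof. by move=> hf hg i hip; rewrite cD hf ?hg ?addr0. Qed.
Lemma hi_opp p f : hi p f -> hi p (- f).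
Proof. by move=> hf i hip; rewrite cN hf ?oppr0. Qed.
Lemma hi_sub p f g : hi p f -> hi p g -> hi p (f - g).
Proof. by move=> hf hg; apply: hi_add => //; apply: hi_opp. Qed.
Lemma hi_sum p (I : Type) (r : seq I) (P : pred I) (F : I -> ps) :
  (forall i, P i -> hi p (F i)) -> hi p (\sum_(i <- r | P i) F i).
Proof. move=> h; apply: big_ind; [exact: hi0 | move=> f g; exact: hi_add | exact: h]. Qed.
Lemma hi_mul p q f g : hi p f -> hi q g -> hi (p + q) (f * g).
Proof.
move=> hf hg m hm; rewrite cM big1 // => i _.
case: (ltnP i p) => hip; first by rewrite hf ?mul0r.
rewrite hg ?mulr0 //.
have hi' := ltn_ord i. lia.
Qed.
Lemma hi_mulr p f g : hi p f -> hi p (f * g).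
Proof. by move=> hf; rewrite -[p]addn0; apply: hi_mul. Qed.
Lemma hi_mull p f g : hi p g -> hi p (f * g).
Proof. by move=> hg; rewrite mulrC; apply: hi_mulr. Qed.
Lemma hi_exp p f e : hi p f -> hi (p * e) (f ^+ e).
Proof.
move=> hf; elim: e => [|e IH]; first by rewrite muln0.
by rewrite exprS mulnS; apply: hi_mul.
Qed.

Lemma mul_hi_coef m (D P : ps) : hi m D -> (D * P) m = D m * P 0%N.
Proof.
move=> hD; rewrite cM big_ord_recr /= subnn big1 ?add0r // => i _.
by rewrite hD ?mul0r.
Qed.

Lemma tpow_coef p (g : ps) m : (tpow p * g) m = if (p <= m)%N then g (m - p)%N else 0.
Proof.
rewrite cM; case: ifP => hpm.
  rewrite (bigD1 (@Ordinal m.+1 p hpm)) //=.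
  rewrite /tpow eqxx mul1r big1 ?addr0 // => i /eqP hi'.
  have : (val i != p) by apply/eqP => h; apply: hi'; apply: val_inj.
  by move/negbTE => ->; rewrite mul0r.
rewrite big1 // => i _; rewrite /tpow.
have : (val i != p).
  apply/eqP => h; move: (ltn_ord i); rewrite h ltnS hpm //.
by move/negbTE => ->; rewrite mul0r.
Qed.

Lemma shiftK p f : hi p f -> f = tpow p * shift p f.
Proof.
move=> hf; apply: funext => m; rewrite tpow_coef; case: ifP => hpm.
  by rewrite /shift subnK.
by rewrite hf // ltnNge hpm.
Qed.

Lemma tpow0 : tpow 0 = 1.
Proof. by apply: funext => m; rewrite /tpow -oneE /pconst; case: (m == 0)%N. Qed.
Lemma tpowD p q : tpow p * tpow q = tpow (p + q).
Proof.
apply: funext => m; rewrite tpow_coef /tpow; case: ifP => hpm.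
  by rewrite -(eqn_add2r p) subnK // addnC.
case: eqP => // h; move: hpm; rewrite h leq_addr //.
Qed.
Lemma tpowX e : tpow 1 ^+ e = tpow e.
Proof. by elim: e => [|e IH]; rewrite ?tpow0 // exprS IH tpowD add1n. Qed.

Lemma hi_shift p q f : hi (p + q) f -> hi q (shift p f).
Proof. by move=> hf i hi'; rewrite /shift hf // addnC ltn_add2l. Qed.

Lemma hi_tpow p : hi p (tpow p).
Proof. by move=> i hi'; rewrite /tpow; case: eqP => // h; move: hi'; rewrite h ltnn. Qed.

Lemma vord_hi (f : ps) p : vord f p -> hi p f. Proof. by case. Qed.
Lemma vord_neq0 (f : ps) p : vord f p -> f <> 0.
Proof. by case=> /eqP h _ hf; apply: h; rewrite hf. Qed.

Lemma vord_exists (f : ps) : f <> 0 -> exists p, vord f p.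
Proof.
move=> hf.
have ex : exists p, f p != 0.
  apply: contra_notP hf => h; apply: funext => m.
  by apply/eqP; apply: contra_notT h => hm; exists m.
exists (ex_minn ex); case: ex_minnP => p hp hmin; split => // i hip.
by apply/eqP; apply: contraTT hip => hi'; rewrite -leqNgt hmin.
Qed.

Lemma vord_mul (f g : ps) p q : vord f p -> vord g q -> vord (f * g) (p + q).
Proof.
move=> [hp0 hp] [hq0 hq]; split; last by apply: hi_mul.
rewrite (shiftK hp) (shiftK hq) mulrACA tpowD tpow_coef leqnn subnn cM0.
by rewrite /shift !add0n mulf_neq0.
Qed.

Lemma vord_exp (f : ps) p e : vord f p -> vord (f ^+ e) (p * e).
Proof.
move=> hf; elim: e => [|e IH].
  by rewrite muln0 expr0; split => //; rewrite c10 oner_neq0.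
by rewrite exprS mulnS; apply: vord_mul.
Qed.

End Basic.
Arguments tpow {k} p.
Arguments shift {k} p f.

Section Newton.
Variable k : fieldType.
Local Notation ps := (ps k).
Variables (Phi : ps -> ps) (z : ps) (w0 lam : k).
Hypothesis hlam : lam != 0.
Hypothesis H0 : forall w : ps, w 0%N = w0 -> Phi w 0%N = z 0%N.
Hypothesis H1 : forall (w w' : ps) m, (0 < m)%N -> w 0%N = w0 -> w' 0%N = w0 ->
  (forall i, (i < m)%N -> w i = w' i) -> Phi w m - Phi w' m = lam * (w m - w' m).

Fixpoint W (m : nat) : ps :=
  match m with
  | 0 => pconst w0
  | m'.+1 => let V := W m' in
      fun i => V i + (if i == m'.+1 then (z m'.+1 - Phi V m'.+1) / lam else 0)
  end.

Lemma W0 m : W m 0%N = w0.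
Proof. by elim: m => [|m IH] //=; rewrite IH addr0. Qed.

Lemma Wstab m i : (i <= m)%N -> W m.+1 i = W m i.
Proof.
move=> him /=; case: eqP => [h|]; last by rewrite addr0.
by move: him; rewrite h ltnn.
Qed.

Lemma Wstab' m m' i : (i <= m)%N -> (m <= m')%N -> W m' i = W m i.
Proof.
move=> him; elim: m' => [|m' IH]; first by rewrite leqn0 => /eqP ->.
rewrite leq_eqVlt => /orP [/eqP <- //|]; rewrite ltnS => hm.
by rewrite Wstab ?IH //; apply: leq_trans hm.
Qed.

Lemma WPhi m i : (i <= m)%N -> Phi (W m) i = z i.
Proof.
elim: m i => [|m IH] i.
  by rewrite leqn0 => /eqP ->; apply: H0; rewrite W0.
case: i => [|i] hi.
  by apply: H0; rewrite W0.
have hd := H1 (w := W m.+1) (w' := W m) (m := i.+1) (ltn0Sn i) (W0 _) (W0 _).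
case: (ltnP i m) => him.
  have -> : Phi (W m.+1) i.+1 = Phi (W m) i.+1.
    apply/eqP; rewrite -subr_eq0 hd.
      by rewrite Wstab // subrr mulr0.
    by move=> j hj; rewrite Wstab //; apply: leq_trans (ltnW hj) _.
  exact: IH.
have him' : i = m by apply/eqP; rewrite eqn_leq him andbT -ltnS.
subst i.
have := hd (fun j hj => @Wstab m j hj).
rewrite /= eqxx [W m m.+1 + _]addrC addrK [lam * _]mulrC divfK //.
by move=> /(congr1 (fun t => t + Phi (W m) m.+1)); rewrite !subrK.
Qed.

Definition wlim : ps := fun j => W j j.

Lemma wlim_agree m i : (i <= m)%N -> wlim i = W m i.
Proof. by move=> him; rewrite /wlim (Wstab' (leqnn i) him). Qed.

Lemma newton : exists w : ps, w 0%N = w0 /\ Phi w = z.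
Proof.
exists wlim; split; first by rewrite /wlim W0.
apply: funext => m; case: m => [|m]; first by apply: H0; rewrite /wlim W0.
have hd := H1 (w := wlim) (w' := W m.+1) (m := m.+1) (ltn0Sn m) (W0 0) (W0 _).
have := hd (fun j hj => wlim_agree (ltnW hj)).
rewrite (wlim_agree (leqnn _)) subrr mulr0 => /eqP; rewrite subr_eq0 => /eqP ->.
exact: WPhi.
Qed.

End Newton.

Section Inv.
Variable k : fieldType.
Local Notation ps := (ps k).

Lemma ps_inv (c : ps) : c 0%N != 0 -> exists e : ps, c * e = 1.
Proof.
move=> hc.
have H0 : forall w : ps, w 0%N = (c 0%N)^-1 -> (c * w) 0%N = (1 : ps) 0%N.
  by move=> w hw; rewrite cM0 hw divff.
have H1 : forall (w w' : ps) m, (0 < m)%N -> w 0%N = (c 0%N)^-1 -> w' 0%N = (c 0%N)^-1 ->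
  (forall i, (i < m)%N -> w i = w' i) -> (c * w) m - (c * w') m = c 0%N * (w m - w' m).
  move=> w w' m hm _ _ hww'.
  rewrite -(cB (c * w) (c * w') m) -mulrBr [c * _]mulrC mul_hi_coef; last first.
    by move=> i hi; rewrite cB hww' // subrr.
  by rewrite cB [LHS]mulrC.
have [w [_ hw]] := newton hc H0 H1.
by exists w.
Qed.

Lemma ps_div (d h : ps) p : vord d p -> hi p h -> exists g : ps, h = d * g.
Proof.
move=> [hd0 hd] hh.
have [e he] : exists e : ps, shift p d * e = 1.
  by apply: ps_inv; rewrite /shift add0n.
exists (e * shift p h).
rewrite {1}(shiftK hd) {1}(shiftK hh).
transitivity (tpow p * ((shift p d * e) * shift p h)); first by rewrite he mul1r.
ring.
Qed.

End Inv.

Section Root.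
Variable k : closedFieldType.
Hypothesis char0 : [pchar k] =i pred0.
Local Notation ps := (ps k).

Lemma natf_neq0_c0 (a : nat) : (0 < a)%N -> a%:R != 0 :> k.
Proof.
move=> ha; apply/negP => h.
have [p hp] := natf0_pchar ha h.
by move: hp; rewrite char0.
Qed.

Lemma ps_root (z : ps) (a : nat) : (0 < a)%N -> z 0%N != 0 ->
  exists w : ps, w 0%N != 0 /\ w ^+ a = z.
Proof.
move=> ha hz.
have [w0 hw0] : exists w0 : k, w0 ^+ a = z 0%N.
  have [x hx] := @solve_monicpoly k a (fun i => if i == 0%N then z 0%N else 0) ha.
  exists x; rewrite hx (bigD1 (Ordinal ha)) //= expr0 mulr1 big1 ?addr0 //.
  move=> i /eqP hi; case: ifP => [/eqP h|_]; last by rewrite mul0r.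
  by exfalso; apply: hi; apply: val_inj.
have w0n : w0 != 0.
  by apply: contraNneq hz => h; rewrite -hw0 h expr0n gtn_eqF.
have hlam : a%:R * w0 ^+ a.-1 != 0 by rewrite mulf_neq0 ?natf_neq0_c0 ?expf_neq0.
have H0 : forall w : ps, w 0%N = w0 -> (w ^+ a) 0%N = z 0%N.
  by move=> w hw; rewrite cX0 hw hw0.
have H1 : forall (w w' : ps) m, (0 < m)%N -> w 0%N = w0 -> w' 0%N = w0 ->
  (forall i, (i < m)%N -> w i = w' i) -> (w ^+ a) m - (w' ^+ a) m = a%:R * w0 ^+ a.-1 * (w m - w' m).
  move=> w w' m hm h0 h0' hww'.
  rewrite -(cB (w ^+ a) (w' ^+ a) m) subrXX mul_hi_coef; last first.
    by move=> i hi; rewrite cB hww' // subrr.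
  rewrite cB mulrC; congr (_ * _).
  rewrite c_sum (eq_bigr (fun _ => w0 ^+ a.-1)).
    by rewrite sumr_const card_ord mulr_natl.
  move=> i _; rewrite cM0 !cX0 h0 h0' -exprD subnK //.
  by rewrite -ltnS prednK.
have [w [hw0' hw]] := newton hlam H0 H1.
by exists w; rewrite hw0'.
Qed.

End Root.

Section Mono.
Variable k : fieldType.
Variable n : nat.
Variable x : nat -> ps k.
Local Notation ps := (ps k).
Local Notation ex := {ffun 'I_n -> nat}.

Definition deg (al : ex) : nat := (\sum_(i < n) al i)%N.
Definition vf L (b : {ffun 'I_n -> 'I_L}) : ex := [ffun i => val (b i)].
Definition delta (be : ex) : mps k n := fun al => (al == be)%:R.
Definition ee (i : 'I_n) : ex := [ffun j => nat_of_bool (j == i)].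
Definition ffadd (al be : ex) : ex := [ffun i => (al i + be i)%N].
Definition ff0 : ex := [ffun _ => 0%N].

Local Notation mono al := (monoeval al x).

Lemma delta_same (al : ex) : delta al al = 1. Proof. by rewrite /delta eqxx. Qed.
Lemma delta_diff (al be : ex) : be != al -> delta al be = 0.
Proof. by move/negbTE; rewrite /delta => ->. Qed.

Lemma monoE (al : ex) : mono al = \prod_(i < n) x i ^+ al i.
Proof. by rewrite /monoeval; apply: eq_bigr => i _; rewrite ppowE. Qed.

Lemma mono_add (al be : ex) : mono (ffadd al be) = mono al * mono be.
Proof.
rewrite !monoE -big_split /=; apply: eq_bigr => i _.
by rewrite ffunE exprD.
Qed.

Lemma mono0 : mono ff0 = 1.
Proof. by rewrite monoE big1 // => i _; rewrite ffunE expr0. Qed.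

Lemma mono_e i : mono (ee i) = x i.
Proof.
rewrite monoE (bigD1 i) //= ffunE eqxx expr1 big1 ?mulr1 // => j hj.
by rewrite ffunE (negbTE hj) expr0.
Qed.

Lemma mono_hi (p : 'I_n -> nat) (al : ex) : (forall i : 'I_n, hi (p i) (x i)) ->
  hi (\sum_(i < n) al i * p i)%N (mono al).
Proof.
move=> hx; rewrite monoE.
apply: (big_ind2 (fun (q : nat) (f : ps) => hi q f)).
- by move=> i.
- by move=> q1 f1 q2 f2 h1 h2; apply: hi_mul.
by move=> i _; rewrite mulnC; apply: hi_exp.
Qed.

Lemma mono_hi1 (al : ex) : (forall i : 'I_n, hi 1 (x i)) -> hi (deg al) (mono al).
Proof.
move=> hx; have := mono_hi (al := al) hx.
by rewrite /deg (eq_bigr (fun i => al i)) // => i _; rewrite muln1.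
Qed.

Lemma deg_ge (al : ex) i : (al i <= deg al)%N.
Proof. by rewrite /deg (bigD1 i) //= leq_addr. Qed.

Lemma boxsum (V : zmodType) L (G : ex -> V) be :
  \sum_(b : {ffun 'I_n -> 'I_L}) (if vf b == be then G (vf b) else 0)
  = if [forall i, (be i < L)%N] then G be else 0.
Proof.
case: forallP => hb.
  pose b0 : {ffun 'I_n -> 'I_L} := [ffun i => Ordinal (hb i)].
  have hvb0 : vf b0 = be by apply/ffunP => i; rewrite !ffunE.
  rewrite (bigD1 b0) //= hvb0 eqxx big1 ?addr0 // => b hb0.
  case: eqP => // hv; exfalso; move/eqP: hb0; apply.
  apply/ffunP => i; apply: val_inj; rewrite !ffunE /=.
  by have := congr1 (fun f : ex => f i) hv; rewrite /vf !ffunE.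
rewrite big1 // => b _; case: eqP => // hv; exfalso; apply: hb => i.
rewrite -hv /vf ffunE; exact: ltn_ord.
Qed.

Lemma subst_add (F G : mps k n) :
  subst (fun al => F al + G al) x = subst F x + subst G x.
Proof.
apply: funext => m; rewrite cD /subst -big_split /=.
by apply: eq_bigr => b _; rewrite mulrDl.
Qed.

Lemma subst_scale c (F : mps k n) :
  subst (fun al => c * F al) x = pconst c * subst F x.
Proof.
apply: funext => m; rewrite pconst_coef /subst mulr_sumr.
by apply: eq_bigr => b _; rewrite mulrA.
Qed.

Lemma subst_zero : subst (fun _ : ex => 0) x = 0.
Proof. by apply: funext => m; rewrite /subst big1 // => b _; rewrite mul0r. Qed.

Lemma subst_opp (F : mps k n) : subst (fun al => - F al) x = - subst F x.
Proof.
have -> : (fun al => - F al) = (fun al => (-1) * F al).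
  by apply: funext => al; rewrite mulN1r.
by rewrite subst_scale pconstN pconst1 mulN1r.
Qed.

Lemma subst_sum (I : Type) (r : seq I) (F : I -> mps k n) :
  subst (fun al => \sum_(j <- r) F j al) x = \sum_(j <- r) subst (F j) x.
Proof.
elim: r => [|j r IH].
  by rewrite big_nil -subst_zero; congr subst; apply: funext => al; rewrite big_nil.
rewrite big_cons -IH -subst_add; congr subst; apply: funext => al.
by rewrite big_cons.
Qed.

Lemma ee_inj (i j : 'I_n) : ee i = ee j -> i = j.
Proof.
move=> /(congr1 (fun f : ex => f i)); rewrite !ffunE eqxx.
by case: eqP.
Qed.

Lemma ee_neq0 i : ee i != ff0.
Proof. apply/eqP => /(congr1 (fun f : ex => f i)); by rewrite !ffunE eqxx. Qed.

Lemma deg_eq0 (al : ex) : deg al = 0%N -> al = ff0.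
Proof.
move=> h; apply/ffunP => i; rewrite ffunE; apply/eqP; rewrite -leqn0 -h.
exact: deg_ge.
Qed.

Lemma deg_two (al : ex) (i j : 'I_n) : i != j -> (al i + al j <= deg al)%N.
Proof.
move=> hij; rewrite /deg (bigD1 i) //= leq_add2l (bigD1 j) 1?eq_sym //=.
exact: leq_addr.
Qed.

Lemma deg_eq1 (al : ex) : deg al = 1%N -> exists i, al = ee i.
Proof.
move=> h.
have [i hi] : exists i, al i != 0%N.
  apply: NNPP => hn; move: h; rewrite /deg big1 // => j _.
  by apply/eqP; apply: NNPP => hj; apply: hn; exists j; apply/negP.
exists i; apply/ffunP => j; rewrite ffunE.
case: (eqVneq j i) => [->|hji] /=.
  by have := deg_ge al i; rewrite h; move: hi; case: (al i) => [|[]].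
have hij : i != j by rewrite eq_sym.
have := deg_two al hij.
rewrite h; move: hi; case: (al i) => // m _; rewrite addSn ltnS leqn0 addn_eq0.
by case/andP => _ /eqP.
Qed.

Definition ffsub (al : ex) (i : 'I_n) : ex := [ffun j => (al j - (j == i))%N].

Lemma ffsub_add (al : ex) i : (0 < al i)%N -> ffadd (ee i) (ffsub al i) = al.
Proof.
move=> h; apply/ffunP => j; rewrite !ffunE.
case: (eqVneq j i) => [->|hji] /=; first by rewrite add1n subn1 prednK.
by rewrite add0n subn0.
Qed.

Lemma mono_single (i : 'I_n) e : mono [ffun j => if j == i then e else 0%N] = x i ^+ e.
Proof.
rewrite monoE (bigD1 i) //= ffunE eqxx big1 ?mulr1 // => j hj.
by rewrite ffunE (negbTE hj) expr0.
Qed.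

Lemma shift_single (i i0 : 'I_n) e (al : ex) : (0 < e)%N ->
  ([ffun m => (al m + (m == i))%N] == [ffun j => if j == i0 then e else 0%N])
  = (i == i0) && (al == [ffun j => if j == i0 then e.-1 else 0%N]).
Proof.
move=> he; apply/eqP/andP.
  move=> E.
  have hi0 : i == i0.
    have := congr1 (fun f : ex => f i) E; rewrite !ffunE eqxx addn1.
    by case: eqP.
  split => //; move/eqP: hi0 => hi0; subst i0.
  apply/eqP/ffunP => j; have := congr1 (fun f : ex => f j) E; rewrite !ffunE.
  by case: eqP => _ /=; [rewrite addn1 => <- | rewrite addn0].
move=> [/eqP hi0 /eqP hal]; subst i0; apply/ffunP => j; rewrite hal !ffunE.
by case: eqP => _ /=; [rewrite addn1 prednK | rewrite addn0].
Qed.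

Lemma subst_sub (F G : mps k n) :
  subst (fun al => F al - G al) x = subst F x - subst G x.
Proof. by rewrite subst_add subst_opp. Qed.

Hypothesis hx1 : forall i : 'I_n, hi 1 (x i).

Lemma subst_delta (be : ex) : subst (delta be) x = mono be.
Proof.
apply: funext => m; rewrite /subst.
rewrite (eq_bigr (fun b => if vf b == be then monoeval (vf b) x m else 0)).
  rewrite (boxsum _ (fun al => monoeval al x m)); case: forallP => // hb.
  have [i hi'] : exists i, ~~ (be i < m.+1)%N.
    by apply/existsP; rewrite -negb_forall; apply/forallP.
  symmetry; apply: mono_hi1 => //; apply: leq_trans (deg_ge be i).
  by rewrite leqNgt.
by move=> b _; rewrite /delta; case: eqP => _; rewrite ?mul1r ?mul0r.
Qed.

Lemma subst_hi D (F : mps k n) : (forall al : ex, F al != 0 -> (D <= deg al)%N) ->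
  hi D (subst F x).
Proof.
move=> hF m hm; rewrite /subst big1 // => b _.
case: (eqVneq (F (vf b)) 0) => [->|hnz]; first by rewrite mul0r.
rewrite mono_hi1 ?mulr0 //; apply: leq_trans hm (hF _ hnz).
Qed.

Lemma subst_box B (F : mps k n) : (forall al : ex, ~~ [forall i, (al i < B)%N] -> F al = 0) ->
  subst F x = \sum_(b : {ffun 'I_n -> 'I_B}) pconst (F (vf b)) * mono (vf b).
Proof.
move=> hF.
have E : F = (fun al => \sum_(b : {ffun 'I_n -> 'I_B}) F (vf b) * delta (vf b) al).
  apply: funext => al.
  rewrite (eq_bigr (fun b => if vf b == al then F (vf b) else 0)).
    rewrite boxsum; case: ifP => // /negbT; exact: hF.
  by move=> b _; rewrite /delta eq_sym; case: eqP; rewrite ?mulr1 ?mulr0.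
rewrite {1}E subst_sum; apply: eq_bigr => b _.
by rewrite subst_scale subst_delta.
Qed.

Lemma subst_const (F : mps k n) : subst F x 0%N = F ff0.
Proof.
rewrite /subst (eq_bigr (fun _ => F ff0)).
  by rewrite sumr_const card_ffun !card_ord exp1n.
move=> b _.
have -> : [ffun i => val (b i)] = ff0.
  by apply/ffunP => i; rewrite !ffunE; case: (b i) => -[].
by rewrite mono0 c10 mulr1.
Qed.

End Mono.

Section Alg.
Variable k : fieldType.
Local Notation ps := (ps k).
Variable S : ps -> Prop.
Hypothesis HS : subalgebra S.
Variable c : nat.
Hypothesis Hc : forall f, hi c f -> S f.
Hypothesis c1 : (0 < c)%N.

Local Notation mI := (max_ideal S).
Local Notation m2 := (max_ideal2 S).

Lemma Sc a : S (pconst a). Proof. by case: HS. Qed.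
Lemma S0 : S 0. Proof. by rewrite -pconst0; apply: Sc. Qed.
Lemma S1 : S 1. Proof. exact: Sc. Qed.
Lemma Sadd f g : S f -> S g -> S (f + g). Proof. by case: HS => _ [h _]; apply: h. Qed.
Lemma Sopp f : S f -> S (- f). Proof. by case: HS => _ [_ [h _]]; apply: h. Qed.
Lemma Smul f g : S f -> S g -> S (f * g). Proof. by case: HS => _ [_ [_ h]]; apply: h. Qed.
Lemma Ssub f g : S f -> S g -> S (f - g). Proof. by move=> hf hg; apply: Sadd => //; apply: Sopp. Qed.
Lemma Ssum (I : Type) (r : seq I) (P : pred I) (F : I -> ps) :
  (forall i, P i -> S (F i)) -> S (\sum_(i <- r | P i) F i).
Proof. move=> h; apply: big_ind; [exact: S0 | exact: Sadd | exact: h]. Qed.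
Lemma Sexp f e : S f -> S (f ^+ e).
Proof. by move=> hf; elim: e => [|e IH]; [exact: S1 | rewrite exprS; apply: Smul]. Qed.
Lemma Sprod (I : Type) (r : seq I) (P : pred I) (F : I -> ps) :
  (forall i, P i -> S (F i)) -> S (\prod_(i <- r | P i) F i).
Proof. move=> h; apply: big_ind; [exact: S1 | exact: Smul | exact: h]. Qed.

Lemma mI_S f : mI f -> S f. Proof. by case. Qed.
Lemma mI_0 f : mI f -> f 0%N = 0. Proof. by case. Qed.
Lemma mI_zero : mI 0. Proof. by split; [exact: S0|]. Qed.
Lemma mI_add f g : mI f -> mI g -> mI (f + g).
Proof. by move=> [hf hf0] [hg hg0]; split; [apply: Sadd | rewrite cD hf0 hg0 addr0]. Qed.
Lemma mI_opp f : mI f -> mI (- f).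
Proof. by move=> [hf hf0]; split; [apply: Sopp | rewrite cN hf0 oppr0]. Qed.
Lemma mI_sub f g : mI f -> mI g -> mI (f - g).
Proof. by move=> hf hg; apply: mI_add => //; apply: mI_opp. Qed.
Lemma mI_mulS r f : S r -> mI f -> mI (r * f).
Proof. by move=> hr [hf hf0]; split; [apply: Smul | rewrite cM0 hf0 mulr0]. Qed.
Lemma mI_hi1 f : S f -> hi 1 f -> mI f.
Proof. by move=> hf h; split => //; apply: h. Qed.
Lemma mI_sum (I : Type) (r : seq I) (P : pred I) (F : I -> ps) :
  (forall i, P i -> mI (F i)) -> mI (\sum_(i <- r | P i) F i).
Proof. move=> h; apply: big_ind; [exact: mI_zero | exact: mI_add | exact: h]. Qed.

Lemma hiS f : hi c f -> mI f.
Proof. by move=> h; apply: mI_hi1; [exact: Hc | exact: hi_le h]. Qed.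

Lemma m2E f : m2 f <-> exists (N : nat) (g h : nat -> ps),
    (forall j, (j < N)%N -> mI (g j) /\ mI (h j)) /\ f = \sum_(j < N) g j * h j.
Proof.
split=> [[N [g [h [H ->]]]]|[N [g [h [H ->]]]]]; exists N, g, h; split => //;
  by rewrite psumE.
Qed.

Lemma m2_zero : m2 0.
Proof. by apply/m2E; exists 0%N, (fun _ => 0), (fun _ => 0); rewrite big_ord0. Qed.

Lemma m2_prod f g : mI f -> mI g -> m2 (f * g).
Proof.
move=> hf hg; apply/m2E; exists 1%N, (fun _ => f), (fun _ => g).
by rewrite big_ord1; split => // j _.
Qed.

Lemma m2_add f g : m2 f -> m2 g -> m2 (f + g).
Proof.
move=> /m2E [N1 [g1 [h1 [H1 ->]]]] /m2E [N2 [g2 [h2 [H2 ->]]]]; apply/m2E.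
exists (N1 + N2)%N, (fun j => if (j < N1)%N then g1 j else g2 (j - N1)%N),
  (fun j => if (j < N1)%N then h1 j else h2 (j - N1)%N); split.
  move=> j hj; case: ifP => hjN; first exact: H1.
  by apply: H2; move: hjN hj => /negbT; rewrite -leqNgt; lia.
rewrite big_split_ord /=; congr (_ + _); apply: eq_bigr => i _ /=.
  by rewrite ltn_ord.
by rewrite ltnNge leq_addr /= addKn.
Qed.

Lemma m2_mulS r f : S r -> m2 f -> m2 (r * f).
Proof.
move=> hr /m2E [N [g [h [H ->]]]]; apply/m2E.
exists N, (fun j => r * g j), h; split.
  by move=> j hj; have [hg hh] := H j hj; split => //; apply: mI_mulS.
by rewrite mulr_sumr; apply: eq_bigr => j _; rewrite mulrA.
Qed.

Lemma m2_opp f : m2 f -> m2 (- f).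
Proof. move=> h; rewrite -mulN1r; apply: m2_mulS => //; apply: Sopp; exact: S1. Qed.
Lemma m2_sub f g : m2 f -> m2 g -> m2 (f - g).
Proof. by move=> hf hg; apply: m2_add => //; apply: m2_opp. Qed.
Lemma m2_sum (I : Type) (r : seq I) (P : pred I) (F : I -> ps) :
  (forall i, P i -> m2 (F i)) -> m2 (\sum_(i <- r | P i) F i).
Proof. move=> h; apply: big_ind; [exact: m2_zero | exact: m2_add | exact: h]. Qed.

Lemma m2_mI f : m2 f -> mI f.
Proof.
move=> /m2E [N [g [h [H ->]]]]; apply: mI_sum => j _.
have [hg hh] := H j (ltn_ord j); apply: mI_mulS => //; exact: mI_S.
Qed.

Lemma m2_hi f : hi (c + c) f -> m2 f.
Proof.
move=> h; rewrite (shiftK (hi_le (leq_addr c c) h)).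
apply: m2_prod; apply: hiS; [exact: hi_tpow | exact: hi_shift].
Qed.

Variables (n : nat) (a : nat -> nat).
Hypothesis Hinc : forall i j, (i < j)%N -> (j < n)%N -> (a i < a j)%N.
Hypothesis HHK : forall b, HKset S b <-> exists2 i, (i < n)%N & a i = b.


Lemma a_mono i j : (i <= j)%N -> (j < n)%N -> (a i <= a j)%N.
Proof.
rewrite leq_eqVlt => /orP [/eqP -> //|hij hj].
exact: ltnW (Hinc hij hj).
Qed.

Lemma val_m_pos b : val_m S b -> (0 < b)%N.
Proof.
move=> [f [[_ hf0] [hb _]]]; rewrite lt0n; apply: contraNneq hb => hb0.
by rewrite hb0 hf0.
Qed.

Lemma not_hi_vord (f : ps) b : ~ hi b f -> exists2 p, (p < b)%N & vord f p.
Proof.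
move=> h.
have hf : f <> 0 by move=> hf; apply: h; rewrite hf; exact: hi0.
have [p hp] := vord_exists hf; exists p => //.
rewrite ltnNge; apply/negP => hbp; apply: h; apply: hi_le hbp _.
exact: vord_hi hp.
Qed.

Lemma L_min' b : val_m S b -> exists2 i, (i < n)%N & (a i <= b)%N.
Proof.
elim/ltn_ind: b => b IH hb.
case: (classic (HKset S b)) => [/HHK [i hi <-]|hK]; first by exists i.
have hb2 : val_m2 S b.
  apply: NNPP => h2; apply: hK; split => //.
have bpos := val_m_pos hb.
move: hb2 => [g [/m2E [N [gs [hs [H hg]]]] [hgb hgl]]].
case: (classic (forall j, (j < N)%N -> hi b (gs j) /\ hi b (hs j))) => hall.
  exfalso; move/eqP: hgb; apply; rewrite hg.
  have : hi (b + b) (\sum_(j < N) gs j * hs j).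
    apply: hi_sum => j _; have [h1 h2] := hall j (ltn_ord j).
    exact: hi_mul.
  by move=> /(_ b); rewrite -{1}[b]add0n ltn_add2r => ->.
have [j [hj hnot]] : exists j, (j < N)%N /\ ~ (hi b (gs j) /\ hi b (hs j)).
  apply: NNPP => h; apply: hall => j hj; apply: NNPP => h'; apply: h.
  by exists j.
have [hgm hhm] := H j hj.
have [f [hfm hnb]] : exists f, mI f /\ ~ hi b f.
  case: (classic (hi b (gs j))) => hgj.
    exists (hs j); split => // hh; exact: hnot.
  by exists (gs j).
have [p hpb hp] := not_hi_vord hnb.
have [i hi hai] := IH p hpb (ex_intro _ f (conj hfm hp)).
by exists i => //; apply: leq_trans hai (ltnW hpb).
Qed.

Lemma L_min b : val_m S b -> (a 0 <= b)%N.
Proof.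
move=> /L_min' [i hi hab]; apply: leq_trans hab.
exact: a_mono.
Qed.

Lemma mI_hi f : mI f -> hi (a 0) f.
Proof.
move=> hf; case: (classic (hi (a 0) f)) => // h.
have [p hp hv] := not_hi_vord h.
have := L_min (ex_intro _ f (conj hf hv)).
by rewrite leqNgt hp.
Qed.

Lemma m2_hi2 f : m2 f -> hi (a 0 + a 0) f.
Proof.
move=> /m2E [N [g [h [H ->]]]]; apply: hi_sum => j _.
by have [h1 h2] := H j (ltn_ord j); apply: hi_mul; apply: mI_hi.
Qed.

Lemma tpow_mI : mI (tpow c).
Proof. exact: (hiS (@hi_tpow k c)). Qed.

Lemma tpow_vord p : vord (tpow p : ps) p.
Proof.
split; last exact: hi_tpow.
by rewrite /tpow eqxx oner_neq0.
Qed.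

Lemma n_pos : (0 < n)%N.
Proof.
have := L_min' (ex_intro _ _ (conj tpow_mI (tpow_vord c))).
by case=> i hi _; apply: leq_ltn_trans hi.
Qed.

Lemma HK_a i : (i < n)%N -> HKset S (a i).
Proof. by move=> hi; apply/HHK; exists i. Qed.

Lemma a0_pos : (0 < a 0)%N.
Proof. by have [hv _] := HK_a n_pos; exact: val_m_pos. Qed.



Lemma hcd : (exists f, ~ S f) -> ~ (forall f, conductor S f -> m2 f) ->
  exists D, [/\ (0 < D)%N, (forall f, hi D f -> S f) & exists2 i, (i < n)%N & (D <= a i)%N].
Proof.
move=> [f0 hf0] hC.
have [f [hcf hnf]] : exists f, conductor S f /\ ~ m2 f.
  apply: NNPP => hn; apply: hC => f hcf; apply: NNPP => hm; apply: hn; by exists f.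
have fn0 : f <> 0 by move=> h; apply: hnf; rewrite h; exact: m2_zero.
have [D hD] := vord_exists fn0.
have hDS : forall h, hi D h -> S h.
  by move=> h hh; have [g ->] := ps_div hD hh; exact: hcf.
have Dp : (0 < D)%N.
  rewrite lt0n; apply/negP => /eqP D0; apply: hf0; apply: hDS.
  by rewrite D0.
have hDm : forall h, hi D h -> mI h.
  by move=> h hh; apply: mI_hi1; [exact: hDS | exact: hi_le Dp hh].
have aux : forall d g, hi D g -> hi (D + D - d)%N g -> ~ m2 g ->
    exists2 b, (D <= b)%N & HKset S b.
  elim=> [|d IH] g hg hgd hng.
    exfalso; apply: hng; rewrite (shiftK hg); apply: m2_prod; apply: hDm.
      exact: hi_tpow.
    by apply: hi_shift; rewrite subn0 in hgd.
  case: (ltnP d (D + D)) => hd; last first.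
    by apply: (IH g) => //; have -> : (D + D - d = 0)%N by lia.
  set p := (D + D - d.+1)%N.
  have hp1 : (p.+1 = D + D - d)%N by rewrite /p; lia.
  case: (eqVneq (g p) 0) => hgp.
    apply: (IH g) => //; rewrite -hp1 => i hi'; case: (ltnP i p) => hip; first exact: hgd.
    by have -> : i = p by lia.
  have hpD : (D <= p)%N by rewrite leqNgt; apply/negP => h; move/eqP: hgp; apply; exact: hg.
  have hv : vord g p by split => //; exact: hgd.
  case: (classic (HKset S p)) => [hK|hK]; first by exists p.
  have [g2 [hg2 hg2v]] : val_m2 S p by apply: NNPP => h2; apply: hK; split => //; exists g; split => //; exact: hDm.
  set l := g p / g2 p.
  have hg2p : g2 p != 0 by case: hg2v.
  apply: (IH (g - pconst l * g2)).
  - apply: hi_sub => //; apply: hi_mull; apply: hi_le hpD _; exact: vord_hi hg2v.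
  - rewrite -hp1 => j hj; rewrite cB pconst_coef.
    case: (ltnP j p) => hjp.
      by rewrite hgd // (vord_hi hg2v) // mulr0 subr0.
    have -> : j = p by lia.
    by rewrite /l divfK // subrr.
  move=> hm; apply: hng.
  have -> : g = (g - pconst l * g2) + pconst l * g2 by ring.
  by apply: m2_add => //; apply: m2_mulS => //; exact: Sc.
have h00 : hi (D + D - (D + D))%N f by rewrite subnn.
have [b hb /HHK [i hi hab]] := aux (D + D)%N f (vord_hi hD) h00 hnf.
by exists D; split => //; exists i; rewrite // hab.
Qed.

Lemma n2 : (exists f, ~ S f) -> forall D, (0 < D)%N -> (forall f, hi D f -> S f) ->
  (exists2 i, (i < n)%N & (D <= a i)%N) -> (1 < n)%N.
Proof.
move=> [f0 hf0] D Dp hDS [i hin hDa].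
rewrite ltnNge; apply/negP => hn1.
have n1 : n = 1%N by have := n_pos; lia.
have i0 : i = 0%N by lia.
subst i.
have hDm : forall h, hi D h -> mI h.
  by move=> h hh; apply: mI_hi1; [exact: hDS | exact: hi_le Dp hh].
have haD : (a 0 <= D)%N.
  apply: L_min; exists (tpow D); split; [apply: hDm; exact: hi_tpow | exact: tpow_vord].
have aD : a 0 = D by apply/eqP; rewrite eqn_leq haD hDa.
case: (ltnP 1 D) => hD.
  have hv : val_m S D.+1 by exists (tpow D.+1); split; [apply: hDm; apply: hi_le (leqnSn D) _; exact: hi_tpow | exact: tpow_vord].
  case: (classic (HKset S D.+1)) => [/HHK [j hj hjD]|hK].
    have j0 : j = 0%N by rewrite n1 in hj; lia.
    by subst j; move: hjD; rewrite aD; lia.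
  have [g [hg hgv]] : val_m2 S D.+1 by apply: NNPP => h2; apply: hK; split.
  have := m2_hi2 hg; rewrite aD => hh.
  case: hgv => /eqP hne _; apply: hne; apply: hh; lia.
have D1 : D = 1%N by lia.
apply: hf0; rewrite -[f0](subrK (pconst (f0 0%N))); apply: Sadd; last exact: Sc.
apply: hDS; rewrite D1 => j; rewrite ltnS leqn0 => /eqP ->.
by rewrite cB /pconst eqxx subrr.
Qed.

Variable x : nat -> ps.
Hypothesis Hx : forall i, (i < n)%N -> S (x i) /\ vord (x i) (a i).

Lemma x_S i : (i < n)%N -> S (x i). Proof. by move/Hx => []. Qed.
Lemma x_hi i : (i < n)%N -> hi (a i) (x i). Proof. by move/Hx => [_ /vord_hi]. Qed.
Lemma x_hia0 i : (i < n)%N -> hi (a 0) (x i).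
Proof. by move=> hi; apply: hi_le (x_hi hi); apply: a_mono. Qed.
Lemma x_mI i : (i < n)%N -> mI (x i).
Proof. by move=> hi; apply: mI_hi1; [exact: x_S | exact: hi_le a0_pos (x_hia0 hi)]. Qed.
Lemma x_hi1 (i : 'I_n) : hi 1 (x i).
Proof. move=> j; rewrite ltnS leqn0 => /eqP ->; exact: mI_0 (x_mI (ltn_ord i)). Qed.

Local Notation lin g := (\sum_(i < n) pconst (g i) * x i).

Lemma lin_upd (g : 'I_n -> k) (i : 'I_n) l :
  \sum_(j < n) pconst (g j + (if j == i then l else 0)) * x j = lin g + pconst l * x i.
Proof.
rewrite (eq_bigr (fun j => pconst (g j) * x j + pconst (if j == i then l else 0) * x j));
  last by move=> j _; rewrite pconstD mulrDl.
rewrite big_split /=; congr (_ + _).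
rewrite (bigD1 i) //= eqxx big1 ?addr0 // => j /negbTE ->.
by rewrite pconst0 mul0r.
Qed.

Lemma span_aux d : forall f, mI f -> hi (c + c - d)%N f ->
  exists g : 'I_n -> k, m2 (f - lin g).
Proof.
elim: d => [|d IH] f hf hfd.
  exists (fun _ => 0); rewrite big1 ?subr0; first by apply: m2_hi; rewrite subn0 in hfd.
  by move=> i _; rewrite pconst0 mul0r.
case: (ltnP d (c + c)) => hd; last first.
  apply: IH => //; have -> : (c + c - d = 0)%N by lia.
  by [].
set p := (c + c - d.+1)%N.
have hp1 : (p.+1 = c + c - d)%N by rewrite /p; lia.
case: (eqVneq (f p) 0) => hfp.
  apply: IH => //; rewrite -hp1 => i hi'; case: (ltnP i p) => hip; first exact: hfd.
  by have -> : i = p by lia.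
have hv : vord f p by split => //; exact: hfd.
have hvm : val_m S p by exists f.
case: (classic (HKset S p)) => [/HHK [i hin hai]|hK].
  set l := f p / x i p.
  have hxp : x i p != 0 by rewrite -hai; case: (Hx hin) => _ [].
  have hf' : mI (f - pconst l * x i) by apply: mI_sub => //; apply: mI_mulS; [exact: Sc | exact: x_mI].
  have hf'hi : hi (c + c - d)%N (f - pconst l * x i).
    rewrite -hp1 => j hj; rewrite cB pconst_coef.
    case: (ltnP j p) => hjp.
      by rewrite hfd // (x_hi hin) ?hai // mulr0 subr0.
    have -> : j = p by lia.
    by rewrite /l divfK // subrr.
  have [g hg] := IH _ hf' hf'hi.
  exists (fun j => g j + (if j == Ordinal hin then l else 0)).
  rewrite lin_upd /=.
  have -> : f - (lin g + pconst l * x i) = (f - pconst l * x i) - lin g by ring.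
  exact: hg.
have [g2 [hg2 hg2v]] : val_m2 S p by apply: NNPP => h2; apply: hK; split.
set l := f p / g2 p.
have hg2p : g2 p != 0 by case: hg2v.
have hf' : mI (f - pconst l * g2) by apply: mI_sub => //; apply: mI_mulS; [exact: Sc | exact: m2_mI].
have hf'hi : hi (c + c - d)%N (f - pconst l * g2).
  rewrite -hp1 => j hj; rewrite cB pconst_coef.
  case: (ltnP j p) => hjp.
    by rewrite hfd // (vord_hi hg2v) // mulr0 subr0.
  have -> : j = p by lia.
  by rewrite /l divfK // subrr.
have [g hg] := IH _ hf' hf'hi.
exists g.
have -> : f - lin g = (f - pconst l * g2 - lin g) + pconst l * g2 by ring.
by apply: m2_add => //; apply: m2_mulS => //; exact: Sc.
Qed.

Lemma span f : mI f -> exists g : 'I_n -> k, m2 (f - lin g).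
Proof. by move=> hf; apply: (span_aux (d := c + c)) => //; rewrite subnn. Qed.

Lemma uniq_lin (g : 'I_n -> k) : m2 (lin g) -> forall i, g i = 0.
Proof.
move=> hm i; apply: NNPP => hgi.
have hgi' : g i != 0 by apply/eqP.
case: (@arg_minnP _ i (fun j : 'I_n => g j != 0) (fun j : 'I_n => nat_of_ord j) hgi') => i0 hg0 hmin.
have hrest : hi (a i0).+1 (\sum_(j < n | j != i0) pconst (g j) * x j).
  apply: hi_sum => j hj.
  case: (eqVneq (g j) 0) => [->|hgj]; first by rewrite pconst0 mul0r; exact: hi0.
  apply: hi_mull; apply: hi_le (x_hi (ltn_ord j)).
  apply: Hinc => //; rewrite ltn_neqAle hmin // andbT.
  by apply: contra hj => /eqP h; apply/eqP/val_inj.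
have hv : vord (lin g) (a i0).
  rewrite (bigD1 i0) //=; split.
    rewrite cD pconst_coef hrest // addr0 mulf_neq0 //; by case: (Hx (ltn_ord i0)) => _ [].
  move=> j hj; rewrite cD pconst_coef hrest ?(x_hi (ltn_ord i0)) ?mulr0 ?addr0 //.
  exact: ltnW.
have [_ hK] := HK_a (ltn_ord i0).
by apply: hK; exists (lin g).
Qed.


Local Notation ex := {ffun 'I_n -> nat}.
Local Notation mono al := (monoeval al x).

Lemma deg_add (al be : ex) : deg (ffadd al be) = (deg al + deg be)%N.
Proof. by rewrite /deg -big_split /=; apply: eq_bigr => i _; rewrite ffunE. Qed.
Lemma deg_ee (i : 'I_n) : deg (ee i) = 1%N.
Proof.
rewrite /deg (bigD1 i) //= ffunE eqxx big1 // => j hj.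
by rewrite ffunE (negbTE hj).
Qed.
Lemma deg_ff0 : deg (ff0 n) = 0%N.
Proof. by rewrite /deg big1 // => i _; rewrite ffunE. Qed.

Lemma mono_S (al : ex) : S (mono al).
Proof. rewrite monoE; apply: Sprod => i _; apply: Sexp; exact: x_S. Qed.

Lemma mono_hia0 (al : ex) : (1 <= deg al)%N -> hi (a 0) (mono al).
Proof.
move=> hd; have := @mono_hi k n x (fun _ => a 0) al (fun i => x_hia0 (ltn_ord i)).
apply: hi_le; rewrite -big_distrl /= -/(deg al).
by rewrite -{1}[a 0]mul1n leq_mul2r hd orbT.
Qed.

Lemma mono_mI (al : ex) : (1 <= deg al)%N -> mI (mono al).
Proof. by move=> hd; apply: mI_hi1; [exact: mono_S | exact: hi_le a0_pos (mono_hia0 hd)]. Qed.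

Inductive PolI (D : nat) : ps -> Prop :=
| PolI0 : PolI D 0
| PolIc (b : k) (al : ex) (y : ps) : (D <= deg al)%N -> PolI D y ->
    PolI D (pconst b * mono al + y).

Lemma PolI_add D y1 y2 : PolI D y1 -> PolI D y2 -> PolI D (y1 + y2).
Proof.
elim=> [|b al y hd hy IH] h2; first by rewrite add0r.
by rewrite -addrA; apply: PolIc => //; apply: IH.
Qed.

Lemma PolI_le D D' y : (D' <= D)%N -> PolI D y -> PolI D' y.
Proof.
move=> hD; elim=> [|b al y' hd hy IH]; first exact: PolI0.
by apply: PolIc => //; apply: leq_trans hD hd.
Qed.

Lemma PolI_mono D (al : ex) : (D <= deg al)%N -> PolI D (mono al).
Proof.
move=> hd; have := PolIc 1 hd (PolI0 D).
by rewrite pconst1 mul1r addr0.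
Qed.

Lemma PolI_scale D b y : PolI D y -> PolI D (pconst b * y).
Proof.
elim=> [|b' al y' hd hy IH]; first by rewrite mulr0; exact: PolI0.
rewrite mulrDr mulrA -pconstM; exact: PolIc.
Qed.

Lemma PolI_sum D (I : Type) (r : seq I) (P : pred I) (F : I -> ps) :
  (forall i, P i -> PolI D (F i)) -> PolI D (\sum_(i <- r | P i) F i).
Proof. move=> h; apply: big_ind; [exact: PolI0 | exact: PolI_add | exact: h]. Qed.

Lemma PolI_monomul D1 D2 (al : ex) y : (D1 <= deg al)%N -> PolI D2 y ->
  PolI (D1 + D2) (mono al * y).
Proof.
move=> hd; elim=> [|b be y' hd' hy IH]; first by rewrite mulr0; exact: PolI0.
rewrite mulrDr; apply: PolI_add => //.
rewrite mulrA (mulrC (mono al)) -mulrA -mono_add.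
have : PolI (D1 + D2) (mono (ffadd al be)).
  by apply: PolI_mono; rewrite deg_add leq_add.
by move=> h; have := PolI_scale b h.
Qed.

Lemma PolI_mul D1 D2 y1 y2 : PolI D1 y1 -> PolI D2 y2 -> PolI (D1 + D2) (y1 * y2).
Proof.
move=> h1 h2; elim: h1 => [|b al y hd hy IH]; first by rewrite mul0r; exact: PolI0.
rewrite mulrDl; apply: PolI_add => //.
rewrite -mulrA; apply: PolI_scale; exact: PolI_monomul.
Qed.

Lemma PolI_S D y : PolI D y -> S y.
Proof.
elim=> [|b al y' hd hy IH]; first exact: S0.
by apply: Sadd => //; apply: Smul; [exact: Sc | exact: mono_S].
Qed.

Lemma PolI_mI D y : (1 <= D)%N -> PolI D y -> mI y.
Proof.
move=> hD; elim=> [|b al y' hd hy IH]; first exact: mI_zero.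
apply: mI_add => //; apply: mI_mulS; first exact: Sc.
by apply: mono_mI; apply: leq_trans hD hd.
Qed.

Lemma PolI_hi D y : (1 <= D)%N -> PolI D y -> hi (a 0) y.
Proof.
move=> hD; elim=> [|b al y' hd hy IH]; first exact: hi0.
apply: hi_add => //; apply: hi_mull; apply: mono_hia0.
exact: leq_trans hD hd.
Qed.

Lemma PolI_c b : PolI 0 (pconst b).
Proof. by have := PolIc b (leq0n (deg (ff0 n))) (PolI0 0); rewrite mono0 mulr1 addr0. Qed.

Lemma PolI_x (i : 'I_n) : PolI 1 (x i).
Proof. by rewrite -(mono_e x i); apply: PolI_mono; rewrite deg_ee. Qed.

Lemma PolI_F D y : PolI D y -> exists F : mps k n,
  (forall al, F al != 0 -> (D <= deg al)%N) /\ subst F x = y.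
Proof.
elim=> [|b al y' hd hy [F [hF hFy]]].
  exists (fun _ => 0); split; [by move=> ?; rewrite eqxx | exact: subst_zero].
exists (fun be => b * @delta k n al be + F be); split.
  move=> be; case: (eqVneq be al) => [-> _ //|hne].
  rewrite delta_diff // mulr0 add0r; exact: hF.
rewrite subst_add subst_scale hFy.
by rewrite (subst_delta x_hi1).
Qed.


Lemma subst_S (F : mps k n) : S (subst F x).
Proof.
pose F1 := fun al : ex => if [forall i, (al i < c)%N] then F al else 0.
pose F2 := fun al : ex => if [forall i, (al i < c)%N] then 0 else F al.
have -> : F = (fun al => F1 al + F2 al).
  by apply: funext => al; rewrite /F1 /F2; case: ifP; rewrite ?addr0 ?add0r.
rewrite subst_add; apply: Sadd.
  rewrite (subst_box x_hi1 (B := c)); last by move=> al /negbTE; rewrite /F1 => ->.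
  by apply: Ssum => b _; apply: Smul; [exact: Sc | exact: mono_S].
apply: Hc; apply: (subst_hi x_hi1) => al; rewrite /F2; case: forallP => h; first by rewrite eqxx.
move=> _.
have [i hi'] : exists i, ~ (al i < c)%N.
  apply: NNPP => h'; apply: h => i; apply: NNPP => h''; apply: h'; by exists i.
apply: leq_trans (deg_ge al i); rewrite leqNgt; exact/negP.
Qed.

Lemma PolI_lin (g : 'I_n -> k) : PolI 1 (lin g).
Proof. by apply: PolI_sum => i _; apply: PolI_scale; exact: PolI_x. Qed.

Lemma claim1 T : forall h, mI h -> exists y, PolI 1 y /\ hi T (h - y).
Proof.
elim/ltn_ind: T => T IH h hh.
case: (leqP T (a 0)) => hT.
  exists 0; split; first exact: PolI0.
  by rewrite subr0; exact: hi_le hT (mI_hi hh).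
have a0p := a0_pos.
have hlt : (T - a 0 < T)%N by lia.
have hTT : T = (T - a 0 + a 0)%N by lia.
have hTT' : T = (a 0 + (T - a 0))%N by lia.
have [g /m2E [N [gs [hs [H hq]]]]] := span hh.
have key : forall N', (N' <= N)%N -> exists y, PolI 1 y /\
    hi T (\sum_(j < N') gs j * hs j - y).
  elim=> [|N' IHN] hN'.
    exists 0; split; first exact: PolI0.
    by rewrite big_ord0 subr0; exact: hi0.
  have [y [hy hyT]] := IHN (ltnW hN').
  have [hgm hhm] := H N' hN'.
  have [y1 [hy1 h1]] := IH _ hlt _ hgm.
  have [y2 [hy2 h2]] := IH _ hlt _ hhm.
  exists (y + y1 * y2); split.
    by apply: PolI_add => //; apply: (PolI_le (D := (1 + 1)%N)) => //; exact: PolI_mul.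
  rewrite big_ord_recr /=.
  have -> : \sum_(i < N') gs i * hs i + gs N' * hs N' - (y + y1 * y2) =
    (\sum_(i < N') gs i * hs i - y) + ((gs N' - y1) * hs N' + y1 * (hs N' - y2)) by ring.
  apply: hi_add => //; apply: hi_add.
    by rewrite hTT; apply: hi_mul => //; exact: mI_hi.
  by rewrite hTT'; apply: hi_mul => //; exact: (PolI_hi (leqnn 1) hy1).
have [y [hy hyT]] := key N (leqnn N).
exists (lin g + y); split; first by apply: PolI_add => //; exact: PolI_lin.
have -> : h - (lin g + y) = (h - lin g) - y by ring.
by rewrite hq.
Qed.

Lemma claim0 T h : S h -> exists y, PolI 0 y /\ hi T (h - y).
Proof.
move=> hS.
have hm : mI (h - pconst (h 0%N)).
  split; first by apply: Ssub => //; exact: Sc.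
  by rewrite cB /pconst eqxx subrr.
have [y [hy hyT]] := claim1 T hm.
exists (pconst (h 0%N) + y); split.
  by apply: PolI_add; [exact: PolI_c | exact: PolI_le hy].
have -> : h - (pconst (h 0%N) + y) = (h - pconst (h 0%N)) - y by ring.
exact: hyT.
Qed.

Lemma claimD D : (1 <= D)%N -> forall T h, hi (D * c) h -> exists y, PolI D y /\ hi T (h - y).
Proof.
elim: D => [//|D IH] _ T h hh.
case: (posnP D) => [D0|Dp].
  subst D; apply: claim1; apply: hiS; by rewrite mul1n in hh.
have hc : hi c h by apply: hi_le hh; rewrite mulSn leq_addr.
have hsh : hi (D * c) (shift c h) by apply: hi_shift; rewrite -mulSn.
have [y' [hy' hy'T]] := IH Dp T _ hsh.
have [y0 [hy0 hy0T]] := claim1 T tpow_mI.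
exists (y0 * y'); split; first by rewrite -add1n; exact: PolI_mul.
rewrite {1}(shiftK hc).
have -> : tpow c * shift c h - y0 * y' = tpow c * (shift c h - y') + (tpow c - y0) * y' by ring.
by apply: hi_add; [apply: hi_mull | apply: hi_mulr].
Qed.

Lemma step_claim j T h : S h -> hi (j * c) h -> exists y, PolI j y /\ hi T (h - y).
Proof.
move=> hS hh; case: (posnP j) => [->|jp]; first exact: claim0.
exact: claimD.
Qed.

Lemma gen f : S f -> exists F : mps k n, f = subst F x.
Proof.
move=> hf.
have step : forall jh : nat * ps, exists F : mps k n,
    S jh.2 -> hi (jh.1 * c) jh.2 ->
    (forall al, F al != 0 -> (jh.1 <= deg al)%N) /\ hi (jh.1.+1 * c) (jh.2 - subst F x).
  move=> [j h] /=; case: (classic (S h /\ hi (j * c) h)) => [[hS hh]|hn].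
    have [y [hy hyT]] := step_claim (j.+1 * c) hS hh.
    have [F [hF hFy]] := PolI_F hy.
    by exists F => _ _; rewrite hFy.
  by exists (fun _ => 0) => hS hh; exfalso; apply: hn.
have [Fs hFs] := choice step.
pose r := fix r j := match j with 0 => f | j'.+1 => r j' - subst (Fs (j', r j')) x end.
have hr : forall j, S (r j) /\ hi (j * c) (r j).
  elim=> [|j [hS hh]]; first by split => //; rewrite mul0n.
  have [_ h2] := hFs (j, r j) hS hh.
  split => //=; apply: Ssub => //; exact: subst_S.
pose G j := Fs (j, r j).
have hG : forall j al, G j al != 0 -> (j <= deg al)%N.
  by move=> j al; have [hS hh] := hr j; have [h1 _] := hFs (j, r j) hS hh; exact: h1.
have tele : forall J, \sum_(j < J) subst (G j) x = f - r J.
  elim=> [|J IH]; first by rewrite big_ord0 subrr.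
  by rewrite big_ord_recr /= IH /G; ring.
pose Ft := fun al : ex => \sum_(j < (deg al).+1) G j al.
exists Ft; apply: funext => m.
pose J := m.+1.
have widen : forall al : ex, (deg al < J)%N -> Ft al = \sum_(j < J) G j al.
  move=> al hal; rewrite /Ft (big_ord_widen J (fun j => G j al) hal) big_mkcond /=.
  apply: eq_bigr => j _; case: ifP => // /negbT; rewrite -leqNgt => hj.
  case: (eqVneq (G j al) 0) => // hnz; have := hG _ _ hnz.
  by rewrite leqNgt hj.
have -> : Ft = (fun al => \sum_(j < J) G j al + (Ft al - \sum_(j < J) G j al)).
  by apply: funext => al; rewrite addrC subrK.
rewrite subst_add cD subst_sum tele.
have hH : hi J (subst (fun al => Ft al - \sum_(j < J) G j al) x).
  apply: (subst_hi x_hi1) => al; apply: contraR; rewrite -ltnNge => hal.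
  by rewrite widen // subrr.
rewrite hH ?addr0 //.
rewrite cB (proj2 (hr J)) ?subr0 //.
by rewrite /J -{1}[m.+1]muln1 leq_mul2l c1 orbT.
Qed.


Lemma deg_pos_idx (al : ex) : (0 < deg al)%N -> exists i, (0 < al i)%N.
Proof.
move=> h; apply: NNPP => hn; move: h; rewrite /deg big1 // => i _.
apply/eqP; rewrite -leqn0 leqNgt; apply/negP => hi'; apply: hn; by exists i.
Qed.

Lemma mono_m2 (al : ex) : (2 <= deg al)%N -> m2 (mono al).
Proof.
move=> hd.
have [i hi'] : exists i, (0 < al i)%N by apply: deg_pos_idx; apply: leq_trans hd.
rewrite -(ffsub_add hi') mono_add mono_e.
apply: m2_prod; first exact: x_mI (ltn_ord i).
apply: mono_mI; have := deg_add (ee i) (ffsub al i); rewrite ffsub_add // deg_ee => h.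
lia.
Qed.

Lemma m2_subst (G : mps k n) : (forall al, (deg al <= 1)%N -> G al = 0) -> m2 (subst G x).
Proof.
move=> hG.
pose B := (c + c)%N.
pose F1 := fun al : ex => if [forall i, (al i < B)%N] then G al else 0.
pose F2 := fun al : ex => if [forall i, (al i < B)%N] then 0 else G al.
have -> : G = (fun al => F1 al + F2 al).
  by apply: funext => al; rewrite /F1 /F2; case: ifP; rewrite ?addr0 ?add0r.
rewrite subst_add; apply: m2_add.
  rewrite (subst_box x_hi1 (B := B)); last by move=> al /negbTE; rewrite /F1 => ->.
  apply: m2_sum => b _; case: (leqP (deg (vf b)) 1) => hd.
    by rewrite /F1 hG // if_same pconst0 mul0r; exact: m2_zero.
  by apply: m2_mulS; [exact: Sc | exact: mono_m2].
apply: m2_hi; apply: (subst_hi x_hi1) => al; rewrite /F2; case: forallP => h; first by rewrite eqxx.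
move=> _.
have [i hi'] : exists i, ~ (al i < B)%N.
  apply: NNPP => h'; apply: h => i; apply: NNPP => h''; apply: h'; by exists i.
apply: leq_trans (deg_ge al i); rewrite leqNgt; exact/negP.
Qed.

Lemma dec (G : mps k n) : m2 (subst G x - pconst (G (ff0 n)) - lin (fun l => G (ee l))).
Proof.
pose G' := fun al => (G al - G (ff0 n) * delta k (ff0 n) al) - \sum_(l < n) G (ee l) * delta k (ee l) al.
have <- : subst G' x = subst G x - pconst (G (ff0 n)) - lin (fun l => G (ee l)).
  rewrite subst_sub subst_sub subst_scale subst_sum (subst_delta x_hi1) mono0 mulr1.
  congr (_ - _); apply: eq_bigr => l _.
  by rewrite subst_scale (subst_delta x_hi1) mono_e.
apply: m2_subst => al hal.
case: (posnP (deg al)) => [/deg_eq0 ->|hp].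
  rewrite /G' delta_same mulr1 subrr sub0r big1 ?oppr0 // => l _.
  by rewrite delta_diff ?mulr0 // eq_sym ee_neq0.
have [i ->] : exists i, al = ee i by apply: deg_eq1; apply/eqP; rewrite eqn_leq hal hp.
rewrite /G' delta_diff ?mulr0 ?subr0; last exact: ee_neq0.
rewrite (bigD1 i) //= delta_same mulr1 big1 ?addr0 ?subrr // => l hl.
by rewrite delta_diff ?mulr0 //; apply/eqP => /ee_inj h; rewrite h eqxx in hl.
Qed.

Lemma rel_lin N (r : nat -> ps) (F : nat -> mps k n) :
  (forall j, (j < N)%N -> S (r j) /\ subst (F j) x = pzero k) ->
  exists sg : 'I_n -> 'I_n -> k, (forall i l, sg i l = sg l i) /\
    forall i : 'I_n, m2 (psum N (fun j => pmul (r j) (subst (pderiv i (F j)) x)) - lin (sg i)).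
Proof.
move=> hR.
have hF0 : forall j, (j < N)%N -> F j (ff0 n) = 0.
  by move=> j hj; have [_ h] := hR j hj; rewrite -(subst_const x) h.
have hF1 : forall j l, (j < N)%N -> F j (ee l) = 0.
  move=> j l hj; have hd := dec (F j); have [_ h] := hR j hj.
  rewrite h hF0 // in hd.
  have hd' := m2_opp hd.
  have E : - (pzero k - pconst 0 - lin (fun l => F j (ee l))) = lin (fun l => F j (ee l)).
    by change (pzero k) with (0 : ps); rewrite pconst0 subr0 sub0r opprK.
  rewrite E in hd'.
  exact: (uniq_lin hd' l).
pose s j i l := pderiv i (F j) (ee l).
have hs_sym : forall j i l, s j i l = s j l i.
  move=> j i l; rewrite /s /pderiv !ffunE; congr (_ * _); first by rewrite eq_sym.
  congr (F j _); apply/ffunP => m; rewrite /ee !ffunE addnC.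
  by [].
pose sg i l := \sum_(j < N) r j 0%N * s j i l.
exists sg; split.
  by move=> i l; apply: eq_bigr => j _; rewrite hs_sym.
move=> i.
have hG0 : forall j, (j < N)%N -> pderiv i (F j) (ff0 n) = 0.
  move=> j hj; rewrite /pderiv ffunE.
  have -> : [ffun m => (ff0 n m + (m == i))%N] = ee i.
    by apply/ffunP => m; rewrite !ffunE.
  by rewrite hF1 // mulr0.
have hdec : forall j : 'I_N, m2 (subst (pderiv i (F j)) x - lin (s j i)).
  move=> j; have := dec (pderiv i (F j)); rewrite hG0 // pconst0 subr0.
  by [].
rewrite psumE.
have -> : \sum_(j < N) pmul (r j) (subst (pderiv i (F j)) x) - lin (sg i) =
   \sum_(j < N) (r j * (subst (pderiv i (F j)) x - lin (s j i)) +
       (r j - pconst (r j 0%N)) * lin (s j i)).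
  rewrite [RHS](eq_bigr (fun j : 'I_N => r j * subst (pderiv i (F j)) x - pconst (r j 0%N) * lin (s j i)));
    last by move=> j _; ring.
  rewrite sumrB; congr (_ - _).
  rewrite /sg (eq_bigr (fun l : 'I_n => \sum_(j < N) pconst (r j 0%N) * (pconst (s j i l) * x l))).
    rewrite exchange_big /=; apply: eq_bigr => j _; rewrite mulr_sumr.
    by [].
  move=> l _; rewrite pconst_sum mulr_suml; apply: eq_bigr => j _.
  by rewrite pconstM mulrA.
apply: m2_sum => j _; apply: m2_add.
  by apply: m2_mulS => //; exact: (proj1 (hR j (ltn_ord j))).
apply: m2_prod.
  split; first by apply: Ssub; [exact: (proj1 (hR j (ltn_ord j))) | exact: Sc].
  by rewrite cB /pconst eqxx subrr.
exact: PolI_mI (leqnn 1) (PolI_lin _).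
Qed.


Lemma tor (i0 i1 : 'I_n) (e0 e1 : nat) : i0 != i1 -> (0 < e0)%N -> (0 < e1)%N ->
  x i0 ^+ e1 = x i1 ^+ e0 ->
  in_relations S x (vscale (x i0 ^+ e1.-1)
     (fun i : 'I_n => (if i == i0 then pconst e1%:R * x i1 else 0)
                     - (if i == i1 then pconst e0%:R * x i0 else 0))).
Proof.
move=> h01 he0 he1 hrel.
pose F := fun al : ex => delta k [ffun j => if j == i0 then e1 else 0%N] al
                        - delta k [ffun j => if j == i1 then e0 else 0%N] al.
exists 1%N, (fun _ => x i1), (fun _ => F); split.
  move=> j _; split; first exact: x_S (ltn_ord i1).
  rewrite subst_sub !(subst_delta x_hi1) !mono_single hrel subrr.
  by [].
move=> i; rewrite psumE big_ord1.
have hd : pderiv i F = fun al =>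
    (if i == i0 then e1%:R else 0) * delta k [ffun j => if j == i0 then e1.-1 else 0%N] al
  - (if i == i1 then e0%:R else 0) * delta k [ffun j => if j == i1 then e0.-1 else 0%N] al.
  apply: funext => al; rewrite /pderiv /F /delta.
  rewrite !shift_single //.
  case: (eqVneq i i0) => [hi|hi].
    subst i; rewrite (negbTE h01) /= subr0 mul0r subr0.
    case: eqP => [->|_]; last by rewrite !mulr0.
    by rewrite ffunE eqxx prednK.
  case: (eqVneq i i1) => [hi'|hi'].
    subst i; rewrite /= ?mul0r ?sub0r ?mulrN.
    case: eqP => [->|_]; last by rewrite !mulr0 ?oppr0.
    by rewrite ffunE eqxx prednK.
  by rewrite /= subrr mulr0 !mul0r subrr.
rewrite hd subst_sub !subst_scale !(subst_delta x_hi1) !mono_single.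
rewrite /vscale /=.
case: (eqVneq i i0) => [hi|hi].
  subst i; rewrite (negbTE h01) pconst0 mul0r !subr0.
  change (pmul ?u ?v) with (u * v); ring.
case: (eqVneq i i1) => [hi'|hi'].
  subst i; rewrite pconst0 !mul0r !sub0r.
  change (pmul ?u ?v) with (u * v).
  have hx : x i0 ^+ e1.-1 * x i0 = x i1 * x i1 ^+ e0.-1.
    by rewrite -exprSr -exprS !prednK.
  transitivity (- pconst e0%:R * (x i0 ^+ e1.-1 * x i0)); first by ring.
  rewrite hx; ring.
rewrite !pconst0 !mul0r !subrr.
by change (pmul ?u ?v) with (u * v); rewrite !mulr0.
Qed.


Lemma lin_single (sg : 'I_n -> k) (j : 'I_n) A :
  \sum_(l < n) pconst ((if l == j then A else 0) - sg l) * x l = pconst A * x j - lin sg.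
Proof.
rewrite (eq_bigr (fun l : 'I_n => pconst (if l == j then A else 0) * x l - pconst (sg l) * x l)).
  rewrite sumrB; congr (_ - _).
  rewrite (bigD1 j) //= eqxx big1 ?addr0 // => l /negbTE ->.
  by rewrite pconst0 mul0r.
by move=> l _; rewrite pconstD pconstN mulrDl mulNr.
Qed.

Lemma final (Hchar : forall m, (0 < m)%N -> m%:R != 0 :> k)
  (hn2 : (1 < n)%N) (hrel : x 0 ^+ a n.-1 = x n.-1 ^+ a 0) :
  (forall f, S f <-> exists F : mps k n, f = subst F x) /\
  ~ in_relations S x (omega n a x) /\
  (exists r : ps, S r /\ r <> pzero k /\ in_relations S x (vscale r (omega n a x))).
Proof.
have hn0 : (0 < n)%N by apply: leq_trans hn2.
have hn1 : (n.-1 < n)%N by rewrite prednK.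
pose i0 : 'I_n := Ordinal hn0.
pose i1 : 'I_n := Ordinal hn1.
have h01 : i0 != i1.
  by apply/eqP => /(congr1 val) /=; lia.
have hom : omega n a x = (fun i : 'I_n => (if i == i0 then pconst (a n.-1)%:R * x i1 else 0)
                     - (if i == i1 then pconst (a 0)%:R * x i0 else 0)).
  apply: funext => i; rewrite /omega addE.
  have -> : (val i == 0%N) = (i == i0) by [].
  have -> : (val i == n.-1) = (i == i1) by [].
  rewrite !pscaleE; case: (i == i0); case: (i == i1) => /=;
    by rewrite ?oppE ?zeroE ?addr0 ?add0r ?subr0 ?sub0r ?oppr0.
split.
  move=> f; split; first exact: gen.
  by move=> [F ->]; exact: subst_S.
split.
  move=> [N [r [F [hR hw]]]].
  have [sg [hsym hsg]] := rel_lin hR.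
  have hw' : forall i, m2 (omega n a x i - lin (sg i)) by move=> i; rewrite hw; exact: hsg.
  have e1 : sg i0 i1 = (a n.-1)%:R.
    have h := hw' i0; rewrite hom /= (negbTE h01) subr0 in h.
    rewrite -(lin_single (sg i0) i1) in h.
    have := uniq_lin h i1; rewrite eqxx => /eqP; rewrite subr_eq0 => /eqP.
    by [].
  have e2 : sg i1 i0 = - (a 0)%:R.
    have h := hw' i1; rewrite hom /= eq_sym (negbTE h01) sub0r eqxx in h.
    have E : - (pconst (a 0)%:R * x i0) - lin (sg i1) = pconst (- (a 0)%:R) * x i0 - lin (sg i1).
      by rewrite pconstN mulNr.
    rewrite E -(lin_single (sg i1) i0) in h.
    have := uniq_lin h i0; rewrite eqxx => /eqP; rewrite subr_eq0 => /eqP.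
    by [].
  have := Hchar (a 0 + a n.-1)%N.
  rewrite addn_gt0 a0_pos natrD -e1 hsym e2 addrN eqxx.
  by move=> /(_ isT).
have hxr : S (x 0 ^+ (a n.-1).-1) by apply: Sexp; exact: x_S.
exists (x 0 ^+ (a n.-1).-1); split => //; split.
  have := vord_exp (a n.-1).-1 (proj2 (Hx hn0)); apply: vord_neq0.
rewrite hom.
have ha1 : (0 < a n.-1)%N by apply: leq_trans a0_pos (a_mono (leq0n _) hn1).
exact: (tor h01 a0_pos ha1 hrel).
Qed.

End Alg.

Unset Implicit Arguments.

Theorem mainTheorem8 (k : closedFieldType)
  (char0 : [pchar k] =i pred0)
  (S : ps k -> Prop)
  (HS : subalgebra S)
  (Hcond : exists c : nat, forall f : ps k, (forall i, (i < c)%N -> f i = 0) -> S f)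
  (Hsing : exists f : ps k, ~ S f)
  (HC : ~ (forall f, conductor S f -> max_ideal2 S f))
  (n : nat) (a : nat -> nat)
  (Hinc : forall i j, (i < j)%N -> (j < n)%N -> (a i < a j)%N)
  (HHK : forall b, HKset S b <-> exists2 i, (i < n)%N & a i = b) :
  exists (u : ps k) (x : nat -> ps k),
    vord u 1 /\
    (forall i, (i < n)%N -> S (x i) /\ vord (x i) (a i)) /\
    (forall f, S f <-> exists F : mps k n, f = subst F x) /\
    x 0%N = ppow u (a 0%N) /\ x n.-1 = ppow u (a n.-1) /\
    ~ in_relations S x (omega n a x) /\
    (exists r : ps k, S r /\ r <> pzero k /\ in_relations S x (vscale r (omega n a x))).
Proof.
have [c Hc'] := Hcond.
have Hc : forall f : ps k, hi c f -> S f by move=> f hf; apply: Hc'.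
have c1 : (0 < c)%N.
  rewrite lt0n; apply/negP => /eqP c0; case: Hsing => f hf; apply: hf; apply: Hc => i.
  by rewrite c0.
have [D [Dp hDS hDa]] := hcd HS c1 HHK Hsing HC.
have hn2 := n2 HS Hc c1 Hinc HHK Hsing Dp hDS hDa.
have hn0 : (0 < n)%N := n_pos Hc c1 HHK.
have a0p := a0_pos Hc c1 HHK.
have hy : forall i, exists y : ps k, (i < n)%N -> S y /\ vord y (a i).
  move=> i; case: (ltnP i n) => hi; last by exists 0.
  have [[y [[hyS _] hyv]] _] := HK_a HHK hi.
  by exists y.
have [ych hych] := choice hy.
have [hy0S hy0v] := hych 0%N hn0.
pose z := shift (a 0%N) (ych 0%N).
have hz : z 0%N != 0 by rewrite /z /shift add0n; case: hy0v.
have [w [hw0 hwz]] := ps_root char0 a0p hz.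
pose u : ps k := tpow 1 * w.
have hupow : forall e, u ^+ e = tpow e * w ^+ e by move=> e; rewrite exprMn tpowX.
have hvu : forall e, vord (u ^+ e) e.
  move=> e; rewrite hupow; split.
    by rewrite tpow_coef leqnn subnn cX0 expf_neq0.
  by move=> i hi; rewrite tpow_coef leqNgt hi.
have hu0 : u ^+ a 0%N = ych 0%N.
  by rewrite hupow hwz /z -(shiftK (vord_hi hy0v)).
pose x := fun i => if i == 0%N then u ^+ a 0%N else if i == n.-1 then u ^+ a n.-1 else ych i.
have hn1 : (n.-1 == 0%N) = false by apply/eqP; lia.
have Hx : forall i, (i < n)%N -> S (x i) /\ vord (x i) (a i).
  move=> i hi; rewrite /x; case: eqP => [->|_].
    by rewrite hu0.
  case: eqP => [->|_]; last exact: hych.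
  split; last exact: hvu.
  apply: hDS; apply: hi_le (vord_hi (hvu _)).
  case: hDa => j hj hDj; apply: leq_trans hDj _; apply: (a_mono Hinc); lia.
have hrel : x 0%N ^+ a n.-1 = x n.-1 ^+ a 0%N.
  by rewrite /x eqxx hn1 eqxx -!exprM mulnC.
have [hgen [hnz htor]] := final HS Hc c1 Hinc HHK Hx (natf_neq0_c0 char0) hn2 hrel.
exists u, x; split; first by have := hvu 1%N; rewrite expr1.
split => //; split => //; split; first by rewrite /x eqxx ppowE.
split => //; by rewrite /x hn1 eqxx ppowE.
Qed.
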